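(* Let $m\geq 3$ and $n\geq 2$, and let $L_{m,n}$ be the lollipop graph. Then $\mathrm{ldim}_f(L_{m,n})=\frac{m}{2}$.
   Context: The lollipop graph $L_{m,n}$ is obtained from a complete graph $K_m$ and a path $P_n$ (on $n$ vertices), disjoint, by adding one edge joining a vertex of $K_m$ to an end vertex of $P_n$. For a connected graph $G$ and edge $uv$, $L(uv)=\{x\in V(G): d(u,x)\neq d(v,x)\}$ ($d$ the shortest-path distance). A function $f:V(G)\to[0,1]$ is a local resolving function if $\sum_{x\in L(uv)}f(x)\geq 1$ for every edge $uv$; $\mathrm{ldim}_f(G)$ is the minimum of $\sum_{v}f(v)$ over all local resolving functions. *)

(* Defs.v *)
From HB Require Import structures.
From mathcomp Require Import all_boot all_order all_algebra.
Set Implicit Arguments. Unset Strict Implicit. Unset Printing Implicit Defensive.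
Import Order.TTheory GRing.Theory Num.Theory.

Section Graphs.
Variables (T : finType) (e : rel T).

Fixpoint within (k : nat) (u : T) : {set T} :=
  match k with
  | 0 => [set u]
  | k'.+1 => within k' u :|: \bigcup_(y in within k' u) [set z | e y z]
  end.

(* shortest-path distance: least k with v within k steps of u
   (every finite distance is < #|T|; unreachable pairs get #|T|) *)
Definition dist (u v : T) : nat :=
  find (fun k => v \in within k u) (iota 0 #|T|).

Definition Lres (u v : T) : {set T} := [set x | dist u x != dist v x].

Definition connected_graph : Prop := forall u v : T, v \in within #|T| u.

Local Open Scope ring_scope.

Definition local_resolving_fun (R : realFieldType) (f : T -> R) : Prop :=
  (forall x, 0 <= f x <= 1) /\
  (forall u v, e u v -> 1 <= \sum_(x in Lres u v) f x).

Definition ldimf_eq (R : realFieldType) (r : R) : Prop :=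
  (exists f : T -> R, local_resolving_fun f /\ \sum_x f x = r) /\
  (forall f : T -> R, local_resolving_fun f -> r <= \sum_x f x).
End Graphs.
Arguments ldimf_eq T e R r : clear implicits.
Arguments local_resolving_fun T e R f : clear implicits.

(* Lollipop L_{m,n} on 'I_(m+n): vertices 0..m-1 form K_m, vertices
   m..m+n-1 form the path P_n, and m-1 is joined to the path end m. *)
Definition lollipop (m n : nat) : rel 'I_(m + n) :=
  fun i j =>
    ((i < m) && (j < m) && (i != j)) ||
    ((m <= maxn i j) && ((i.+1 == j :> nat) || (j.+1 == i :> nat))).
Arguments lollipop m n i j : clear implicits.

(* Main.v *)
Require Import Defs.
From HB Require Import structures.
From mathcomp Require Import all_boot all_order all_algebra.
From mathcomp Require Import zify ring lra.
Import Order.TTheory GRing.Theory Num.Theory.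

Section Gen.
Variables (T : finType) (e : rel T).

Lemma within_mono k u : within e k u \subset within e k.+1 u.
Proof. by rewrite /= subsetUl. Qed.

Lemma within_step k u y z : y \in within e k u -> e y z -> z \in within e k.+1 u.
Proof.
move=> Hy Hyz; rewrite /= inE; apply/orP; right.
by apply/bigcupP; exists y => //; rewrite inE.
Qed.

Lemma within0 u z : (z \in within e 0 u) = (z == u).
Proof. by rewrite /= inE. Qed.

Lemma withinS k u z : z \in within e k.+1 u ->
  z \in within e k u \/ exists2 y, y \in within e k u & e y z.
Proof.
rewrite /= inE => /orP [H|/bigcupP [y Hy]]; [by left|].
by rewrite inE => H; right; exists y.
Qed.

Lemma within_trans j k u v z : v \in within e j u -> z \in within e k v ->
  z \in within e (j + k) u.
Proof.
move=> Hv; elim: k z => [|k IH] z.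
  by rewrite within0 addn0 => /eqP ->.
case/withinS => [H|[y Hy Hyz]].
  by rewrite addnS; apply: (subsetP (within_mono _ _)); exact: IH.
by rewrite addnS; apply: within_step (IH _ Hy) Hyz.
Qed.

Lemma within_lip (h : T -> nat) :
  (forall y z, e y z -> (h z <= h y + 1)%N /\ (h y <= h z + 1)%N) ->
  forall k u z, z \in within e k u -> (h z <= h u + k)%N /\ (h u <= h z + k)%N.
Proof.
move=> Hh; elim=> [|k IH] u z.
  by rewrite within0 => /eqP ->; rewrite addn0 leqnn.
case/withinS => [/IH [H1 H2]|[y /IH [H1 H2] /Hh [H3 H4]]]; lia.
Qed.

Lemma find_iota_eq (p : pred nat) N k : (k < N)%N -> p k ->
  (forall j, (j < k)%N -> ~~ p j) -> find p (iota 0 N) = k.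
Proof.
move=> kN pk Hj.
have hs : has p (iota 0 N) by apply/hasP; exists k => //; rewrite mem_iota.
have jlt : (find p (iota 0 N) < N)%N by rewrite -[X in (_ < X)%N](size_iota 0 N) -has_find.
case: (ltngtP (find p (iota 0 N)) k) => // Hjk.
  have := nth_find 0 hs; rewrite nth_iota // add0n => Hpj.
  by have := Hj _ Hjk; rewrite Hpj.
have := before_find 0 Hjk; rewrite nth_iota // add0n pk //.
Qed.

Lemma dist_eq u x k : (k < #|T|)%N -> x \in within e k u ->
  (forall j, (j < k)%N -> x \notin within e j u) -> dist e u x = k.
Proof. by move=> *; apply: find_iota_eq. Qed.

End Gen.

Lemma sum_sub (R : realDomainType) (T : finType) (P Q : pred T) (f : T -> R) :
  (forall x, 0 <= f x)%R -> (forall x, P x -> Q x) ->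
  (\sum_(x | P x) f x <= \sum_(x | Q x) f x)%R.
Proof.
move=> f0 PQ; rewrite [X in (X <= _)%R]big_mkcond [X in (_ <= X)%R]big_mkcond /=.
apply: ler_sum => x _; case: (boolP (P x)) => Px; first by rewrite (PQ _ Px).
by case: (Q x).
Qed.

Lemma sum_ge2 (R : realDomainType) (T : finType) (P : pred T) (f : T -> R) u v :
  (forall x, 0 <= f x)%R -> u != v -> P u -> P v ->
  (f u + f v <= \sum_(x | P x) f x)%R.
Proof.
move=> f0 uv Pu Pv; rewrite (bigD1 u) //= (bigD1 v) /=; last by rewrite Pv eq_sym.
by rewrite lerD2l lerDl sumr_ge0.
Qed.

Lemma sum_const_ord (R : realDomainType) k (c : R) : (\sum_(i < k) c = c *+ k)%R.
Proof. by rewrite sumr_const card_ord. Qed.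

Section Lol.
Variables (m n : nat).
Hypothesis Hm : (3 <= m)%N.
Local Notation T := 'I_(m + n).
Local Notation e := (lollipop m n).

Lemma lol_cases (x y : T) : e x y ->
  [/\ (x < m)%N, (y < m)%N & x != y] \/
  ((m <= maxn x y)%N /\ (x.+1 = y \/ y.+1 = x)).
Proof.
rewrite /lollipop => /orP [/andP [/andP [a b] c]|/andP [a /orP [/eqP b|/eqP b]]]; by [left|right; auto].
Qed.

Lemma lol_irr (x : T) : e x x = false.
Proof. rewrite /lollipop eqxx andbF /=; apply/negbTE; apply/negP=> /andP[_ /orP[] /eqP]; lia. Qed.

Lemma lol_cl (x y : T) : (x < m)%N -> (y < m)%N -> x != y -> e x y.
Proof. by move=> a b c; rewrite /lollipop a b c. Qed.

Lemma lol_path (x y : T) : (m.-1 <= x)%N -> (y = x.+1 :> nat) -> e x y /\ e y x.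
Proof.
move=> a b; rewrite /lollipop; split; apply/orP; right; apply/andP; split;
  rewrite ?b ?eqxx ?orbT //; lia.
Qed.

Definition hh (x : T) : nat := (x - (m - 2))%N.

Lemma hh_lip y z : e y z -> (hh z <= hh y + 1)%N /\ (hh y <= hh z + 1)%N.
Proof.
rewrite /hh => /lol_cases [[a b _]|[_ [c|c]]]; lia.
Qed.

Lemma cardT : #|T| = (m + n)%N.
Proof. by rewrite card_ord. Qed.

Lemma dist_self (u : T) : dist e u u = 0%N.
Proof.
apply: dist_eq => //; first by rewrite cardT; lia.
by rewrite within0.
Qed.

Lemma dist_adj (u v : T) : e u v -> dist e u v = 1%N.
Proof.
move=> Huv; apply: dist_eq; first by rewrite cardT; lia.
  by apply: within_step Huv; rewrite within0.
move=> j; rewrite ltnS leqn0 => /eqP ->; rewrite within0.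
by apply/eqP => E; move: Huv; rewrite E lol_irr.
Qed.

Lemma distB (u x : T) : (u < m.-1)%N -> (m.-1 <= x)%N -> dist e u x = hh x.
Proof.
move=> Hu Hx.
have mem : forall d (y : T), (y = m.-1 + d :> nat) -> y \in within e d.+1 u.
  elim=> [|d IH] y Hy.
    apply: (@within_step _ _ _ _ u); first by rewrite within0.
    apply: lol_cl; try lia; apply/eqP => E; move: Hy Hu; rewrite -E; lia.
  have Hp : (m.-1 + d < m + n)%N by have := ltn_ord y; lia.
  apply: (@within_step _ _ _ _ (Ordinal Hp)); first exact: IH.
  by have [] := @lol_path (Ordinal Hp) y ltac:(rewrite /=; lia) ltac:(rewrite /=; lia).
apply: dist_eq; first by rewrite cardT /hh; have := ltn_ord x; lia.
  have -> : hh x = (x - m.-1).+1 by rewrite /hh; lia.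
  apply: mem; lia.
move=> j Hj; apply/negP => /(@within_lip _ _ _ hh_lip) [H1 _].
move: H1 Hj; rewrite /hh; lia.
Qed.

Lemma distA (a x : T) : (a < m.-1)%N -> (m.-1 <= x)%N -> dist e x a = hh x.
Proof.
move=> Ha Hx.
have mem : forall d (y : T), (y = m.-1 + d :> nat) -> a \in within e d.+1 y.
  elim=> [|d IH] y Hy.
    apply: (@within_step _ _ _ _ y); first by rewrite within0.
    apply: lol_cl; try lia; apply/eqP => E; move: Hy; rewrite E; lia.
  have Hp : (m.-1 + d < m + n)%N by have := ltn_ord y; lia.
  have H1 : Ordinal Hp \in within e 1 y.
    apply: (@within_step _ _ _ _ y); first by rewrite within0.
    by have [] := @lol_path (Ordinal Hp) y ltac:(rewrite /=; lia) ltac:(rewrite /=; lia).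
  by have := @within_trans _ _ _ _ _ _ _ H1 (IH (Ordinal Hp) erefl); rewrite add1n.
apply: dist_eq; first by rewrite cardT /hh; have := ltn_ord x; lia.
  have -> : hh x = (x - m.-1).+1 by rewrite /hh; lia.
  apply: mem; lia.
move=> j Hj; apply/negP => /(@within_lip _ _ _ hh_lip) [_ H1].
move: H1 Hj; rewrite /hh; lia.
Qed.

End Lol.

Local Open Scope ring_scope.


Section Main.
Variables (m n : nat) (R : realFieldType).
Hypothesis Hm : (3 <= m)%N.
Local Notation T := 'I_(m + n).
Local Notation e := (lollipop m n).

Lemma ord_of k (H : (k < m + n)%N) : T.
Proof. exact: Ordinal H. Qed.

Lemma upper : exists f : T -> R, local_resolving_fun _ e R f /\ \sum_x f x = (m%:R : R) / 2.
Proof.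
have H0 : (0 < m + n)%N by lia.
have H1 : (1 < m + n)%N by lia.
pose a0 : T := Ordinal H0. pose a1 : T := Ordinal H1.
have dA := @distA m n Hm. have dB := @distB m n Hm. have dj := @dist_adj m n Hm. have ds := @dist_self m n Hm.
exists (fun x : T => if (x < m)%N then 2^-1 else 0 : R).
have f0 : forall x : T, 0 <= (if (x < m)%N then 2^-1 else 0 : R) by move=> x; case: ifP => _; lra.
split; [split|].
- by move=> x; case: ifP => _; apply/andP; split; lra.
- move=> u v Huv.
  case/lol_cases: (Huv) => [[Hu Hv Huv']|[Hmax Hs]].
    apply: le_trans (@sum_ge2 _ _ (fun x => x \in Lres e u v) _ _ _ f0 Huv' _ _); rewrite ?Hu ?Hv; first lra.
      by rewrite inE ds (dj v u (@lol_cl m n v u Hv Hu ltac:(by rewrite eq_sym Huv'))).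
    rewrite inE ds (dj _ _ Huv) //.
  have Hu : (m.-1 <= u)%N by case: Hs; lia.
  have Hv : (m.-1 <= v)%N by case: Hs; lia.
  have a01 : a0 != a1 by [].
  have Ha0 : (a0 < m.-1)%N by rewrite /=; lia.
  have Ha1 : (a1 < m.-1)%N by rewrite /=; lia.
  have L : forall a : T, (a < m.-1)%N -> a \in Lres e u v.
    move=> a Ha; rewrite inE !dA //= /hh; apply/eqP; case: Hs; lia.
  apply: le_trans (@sum_ge2 _ _ (fun x => x \in Lres e u v) _ _ _ f0 a01 (L _ Ha0) (L _ Ha1)).
  have -> : (a0 < m)%N by rewrite /=; lia.
  have -> : (a1 < m)%N by rewrite /=; lia.
  lra.
- rewrite -big_mkcond /= -(big_ord_widen _ (fun _ => 2^-1)); last lia.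
  by rewrite sum_const_ord mulr_natl.
Qed.

Lemma lower (f : T -> R) : local_resolving_fun _ e R f -> (m%:R : R) / 2 <= \sum_x f x.
Proof.
move=> [Hf Hedge].
have f0 : forall x, 0 <= f x by move=> x; case/andP: (Hf x).
have dA := @distA m n Hm. have dB := @distB m n Hm. have dj := @dist_adj m n Hm.
have HM : (m.-1 < m + n)%N by lia.
pose M : T := Ordinal HM.
have pair : forall x y : T, (x < m.-1)%N -> (y < m.-1)%N -> x != y -> 1 <= f x + f y.
  move=> x y Hx Hy xy.
  have Exy : e x y by apply: (@lol_cl m n x y) => //; lia.
  apply: le_trans (Hedge x y Exy) _.
  apply: le_trans (@sum_sub _ _ (fun z => z \in Lres e x y) (fun z => (z == x) || (z == y)) f f0 _) _.
    move=> z; rewrite inE; apply: contraTT; case/norP => zx zy; rewrite negbK.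
    case: (ltnP z m) => Hz.
      rewrite !dj //; apply: (@lol_cl m n) => //; try lia; by rewrite eq_sym.
    by rewrite !dB //; lia.
  rewrite (bigD1 x) /= ?eqxx // (bigD1 y) /=; last by rewrite eqxx orbT eq_sym.
  rewrite big_pred0 ?addr0 //.
  by move=> z; case: (z == x); case: (z == y).
have [u0 [Hu0 Hge]] : exists u0 : T, (u0 < m.-1)%N /\ forall x : T, (x < m.-1)%N -> x != u0 -> 2^-1 <= f x.
  case: (boolP [exists u : T, (u < m.-1)%N && (f u < 2^-1)]).
    case/existsP => u0 /andP [Hu0 Hf0]; exists u0; split => // x Hx xu.
    have := pair x u0 Hx Hu0 xu; lra.
  rewrite negb_exists => /forallP Hall.
  have H0 : (0 < m + n)%N by lia.
  exists (Ordinal H0); split; first by rewrite /=; lia.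
  by move=> x Hx _; have := Hall x; rewrite Hx /= -leNgt.
have HS : 1 <= f u0 + \sum_(x : T | ~~ (x < m.-1)%N) f x.
  have EuM : e u0 M.
    apply: (@lol_cl m n) => /=; [lia|lia|]; apply/eqP => E; move: Hu0; rewrite E /=; lia.
  apply: le_trans (Hedge u0 M EuM) _.
  apply: le_trans (@sum_sub _ _ (fun z => z \in Lres e u0 M) (fun z => (z == u0) || ~~ (z < m.-1)%N) f f0 _) _.
    move=> z; rewrite inE; apply: contraTT; case/norP => zu; rewrite negbK => Hz; rewrite negbK.
    rewrite !dj //; apply: (@lol_cl m n) => //=; try lia; try by rewrite eq_sym.
    apply/eqP => E; move: Hz; rewrite -E /=; lia.
  rewrite (bigD1 u0) ?eqxx //= lerD2l.
  apply: (@sum_sub _ _ (fun z => ((z == u0) || ~~ (z < m.-1)%N) && (z != u0)) (fun z => ~~ (z < m.-1)%N) f f0).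
  by move=> z /andP [/orP [/eqP E|H] Hz] //; move: Hz; rewrite E eqxx.
have Em : ((m.-1)%:R : R) = m%:R - 1 by rewrite -subn1 natrB //; lia.
have HA : (m%:R - 2) / 2 <= \sum_(x : T | (x < m.-1)%N && (x != u0)) f x.
  apply: le_trans (@ler_sum _ _ _ _ (fun _ => 2^-1) f _); last first.
    by move=> x /andP [Hx xu]; apply: Hge.
  have C : \sum_(x : T | (x < m.-1)%N) (2^-1 : R) = 2^-1 + \sum_(x : T | (x < m.-1)%N && (x != u0)) 2^-1 by rewrite (bigD1 u0).
  rewrite -(big_ord_widen _ (fun _ => 2^-1)) in C; last lia.
  rewrite sum_const_ord -(mulr_natr (2^-1 : R) m.-1) Em in C.
  lra.
rewrite (bigID (fun x : T => (x < m.-1)%N)) /= (bigD1 u0) //=.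
lra.
Qed.
End Main.

Theorem corollary2p6 (R : realFieldType) (m n : nat) :
  (3 <= m)%N -> (2 <= n)%N ->
  ldimf_eq _ (lollipop m n) R ((m%:R : R) / 2).
Proof.
move=> Hm Hn; split; [exact: upper | exact: lower].
Qed.
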